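(* For $n\ge 0$ let $s_n$ be the number of permutations of $\{1,\dots,n\}$ that are achievable by two stacks in series, and let $t_n$ be the number of achievable permutations $a_1\cdots a_n$ of $\{1,\dots,n\}$ for which there is no $j$ with $a_{j+1}=a_j+1$ (with $s_0=t_0=1$). Let $S(x)=\sum_{n\ge0}s_nx^n$ and $T(x)=\sum_{n\ge0}t_nx^n$. Then $S(x)=T\!\left(\frac{x}{1-x}\right)$, and consequently for every $n\ge1$, $$s_n=\sum_{i=1}^{n}\binom{n-1}{i-1}t_i.$$
   Context: Two stacks in series: a machine with an input stream, a first stack, a second stack and an output stream, with three moves: $\rho$ moves the next element of the input onto the top of the first stack; $\lambda$ moves the top element of the first stack onto the top of the second stack; $\mu$ moves the top element of the second stack to the end of the output. A permutation $q$ of $\{1,\dots,m\}$ is achievable if, starting with input $1,2,\dots,m$ (in this order) and both stacks empty, some finite sequence of these moves ends with empty input, empty stacks, and output equal to $q$. *)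

(* Defs.v *)
From mathcomp Require Import all_boot all_order all_algebra.
From mathcomp Require Import boolp.
Set Implicit Arguments. Unset Strict Implicit. Unset Printing Implicit Defensive.
Import GRing.Theory.

(* Two stacks in series.  A state is (input, stack1, stack2, output);
   stacks are lists with the top element at the head; the output is read
   left to right (new elements are appended at the end). *)
Record ts_state := TSState {
  ts_in : seq nat; ts_st1 : seq nat; ts_st2 : seq nat; ts_out : seq nat }.

Inductive ts_move := Rho | Lambda | Mu.

Definition ts_step (m : ts_move) (s : ts_state) : option ts_state :=
  match m, s with
  | Rho, TSState (x :: i) a b o => Some (TSState i (x :: a) b o)
  | Lambda, TSState i (x :: a) b o => Some (TSState i a (x :: b) o)
  | Mu, TSState i a (x :: b) o => Some (TSState i a b (rcons o x))
  | _, _ => None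
  end.

Fixpoint ts_run (ms : seq ts_move) (s : ts_state) : option ts_state :=
  match ms with
  | [::] => Some s
  | m :: ms' => match ts_step m s with
                | Some s' => ts_run ms' s'
                | None => None
                end
  end.

Definition achievable (m : nat) (q : seq nat) : Prop :=
  exists ms : seq ts_move,
    ts_run ms (TSState (iota 1 m) [::] [::] [::]) = Some (TSState [::] [::] [::] q).

Definition no_succession (q : seq nat) : bool :=
  all (fun p : nat * nat => p.2 != p.1.+1) (zip q (behead q)).

(* s_n : number of achievable permutations of {1..n};
   t_n : those among them with no succession.  (permutations (iota 1 n) lists
   each permutation of 1..n exactly once.) *)
Definition s_num (n : nat) : nat :=
  count (fun q => `[< achievable n q >]) (permutations (iota 1 n)).

Definition t_num (n : nat) : nat :=
  count (fun q => `[< achievable n q >] && no_succession q)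
        (permutations (iota 1 n)).

(* Main.v *)
Require Import Defs.
From mathcomp Require Import all_boot all_order all_algebra.
From mathcomp Require Import boolp.
From mathcomp Require Import zify ring.
Import GRing.Theory.
Set Implicit Arguments. Unset Strict Implicit. Unset Printing Implicit Defensive.

Lemma run_cat a b s t : ts_run a s = Some t -> ts_run (a ++ b) s = ts_run b t.
Proof.
elim: a s => [|m a IH] s /=; first by case=> ->.
by case: (ts_step m s) => // s1; apply: IH.
Qed.

Section Del.
Variable v : nat.
Definition down (x : nat) := if v.+1 < x then x.-1 else x.
Definition del (l : seq nat) := map down (filter (predC1 v.+1) l).
Definition dstate s := TSState (del (ts_in s)) (del (ts_st1 s)) (del (ts_st2 s)) (del (ts_out s)).

Lemma step_del m s s1 : ts_step m s = Some s1 ->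
  dstate s1 = dstate s \/ ts_step m (dstate s) = Some (dstate s1).
Proof.
case: s => i a b o; case: m => /=.
- case: i => // x i [<-]; rewrite /dstate /del /=.
  by case: (x == v.+1); [left|right].
- case: a => // x a [<-]; rewrite /dstate /del /=.
  by case: (x == v.+1); [left|right].
- case: b => // x b [<-]; rewrite /dstate /del /= filter_rcons /=.
  by case: (x == v.+1) => /=; [left|right; rewrite map_rcons].
Qed.

Lemma run_del ms s s' : ts_run ms s = Some s' ->
  exists ms', ts_run ms' (dstate s) = Some (dstate s').
Proof.
elim: ms s => [|m ms IH] s /=; first by case=> ->; exists [::].
case E: (ts_step m s) => [s1|] // /IH [ms1 H1].
case: (step_del E) => [Ed|Es]; first by exists ms1; rewrite -Ed.
by exists (m :: ms1) => /=; rewrite Es.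
Qed.

Lemma del_iota n : v <= n -> del (iota 1 n.+1) = iota 1 n.
Proof.
move=> vn.
have -> : n.+1 = v + (n.+1 - v) by lia.
rewrite iotaD add1n subSn // /= /del filter_cat map_cat /= eqxx /=.
have -> : filter (predC1 v.+1) (iota 1 v) = iota 1 v.
  apply/all_filterP/allP => x; rewrite mem_iota /=; lia.
have -> : filter (predC1 v.+1) (iota v.+2 (n - v)) = iota v.+2 (n - v).
  apply/all_filterP/allP => x; rewrite mem_iota /=; lia.
have -> : map down (iota 1 v) = iota 1 v.
  apply: map_id_in => x; rewrite mem_iota /down; case: ifP; lia.
have -> : map down (iota v.+2 (n - v)) = iota v.+1 (n - v).
  rewrite -[v.+2]add1n iotaDl -map_comp -[v.+1]addn0 iotaDl.
  apply: map_id_in => x /mapP [y _ ->] /=; rewrite /down; case: ifP; lia.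
have -> : n = v + (n - v) by lia.
by rewrite iotaD add1n addKn.
Qed.

Lemma ach_del n q : achievable n.+1 q -> v <= n -> achievable n (del q).
Proof.
move=> [ms H] vn; have [ms' H'] := run_del H.
by exists ms'; move: H'; rewrite /dstate /= del_iota.
Qed.
End Del.

Section Ins.
Variable v : nat.
Definition up (x : nat) := if v < x then x.+1 else x.
Definition E (x : nat) := if x == v then [:: v; v.+1] else [:: up x].
Definition E' (x : nat) := if x == v then [:: v.+1; v] else [:: up x].
Definition ins (l : seq nat) := flatten (map E l).
Definition ins' (l : seq nat) := flatten (map E' l).
Definition istate s := TSState (ins (ts_in s)) (ins' (ts_st1 s)) (ins (ts_st2 s)) (ins (ts_out s)).

Lemma ins_rcons o x : ins (rcons o x) = ins o ++ E x.
Proof. by rewrite /ins map_rcons flatten_rcons. Qed.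

Lemma step_ins m s s1 : ts_step m s = Some s1 ->
  exists ms, ts_run ms (istate s) = Some (istate s1).
Proof.
case: s => i a b o; case: m => /=.
- case: i => // x i [<-]; rewrite /istate /ins /ins' /= /E /E'.
  by case: (x == v); [exists [:: Rho; Rho] | exists [:: Rho]].
- case: a => // x a [<-]; rewrite /istate /ins /ins' /= /E /E'.
  by case: (x == v); [exists [:: Lambda; Lambda] | exists [:: Lambda]].
- case: b => // x b [<-]; rewrite /istate /= ins_rcons /ins /= /E.
  case: (x == v); [exists [:: Mu; Mu] | exists [:: Mu]] => /=;
  by rewrite -!cats1 -?catA.
Qed.

Lemma run_ins ms s s' : ts_run ms s = Some s' ->
  exists ms', ts_run ms' (istate s) = Some (istate s').
Proof.
elim: ms s => [|m ms IH] s /=; first by case=> ->; exists [::].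
case Es: (ts_step m s) => [s1|] // /IH [ms1 H1].
have [ms0 H0] := step_ins Es.
by exists (ms0 ++ ms1); rewrite (run_cat _ H0).
Qed.

Lemma ins_notin l : v \notin l -> ins l = map up l.
Proof.
elim: l => // x l IH; rewrite in_cons negb_or => /andP [xv lv].
rewrite /ins /= -/(ins l) IH // /E ifN_eq //; by rewrite eq_sym.
Qed.

Lemma ins_cons x l : ins (x :: l) = E x ++ ins l.
Proof. by []. Qed.

Lemma ins_cat l1 l2 : ins (l1 ++ l2) = ins l1 ++ ins l2.
Proof. by rewrite /ins map_cat flatten_cat. Qed.

Lemma ins_iota n : 0 < v <= n -> ins (iota 1 n) = iota 1 n.+1.
Proof.
move=> vn.
have -> : n = v.-1 + (n - v).+1 by lia.
rewrite iotaD ins_cat add1n prednK; last lia.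
rewrite [iota v _]/= ins_cons /E eqxx -/E.
rewrite !ins_notin; first last.
- by rewrite mem_iota; lia.
- by rewrite mem_iota; lia.
have -> : map up (iota 1 v.-1) = iota 1 v.-1.
  apply: map_id_in => x; rewrite mem_iota /up; case: ifP; lia.
have -> : map up (iota v.+1 (n - v)) = iota v.+2 (n - v).
  rewrite -[v.+2]add1n iotaDl; apply/eq_in_map => x; rewrite mem_iota /up /=; case: ifP; lia.
have -> : (v.-1 + (n - v).+1).+1 = v.-1 + (n - v).+2 by lia.
rewrite iotaD add1n prednK; last lia.
done.
Qed.

Lemma ach_ins n q : achievable n q -> 0 < v <= n -> achievable n.+1 (ins q).
Proof.
move=> [ms H] vn; have [ms' H'] := run_ins H.
by exists ms'; move: H'; rewrite /istate /= ins_iota.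
Qed.
End Ins.

Definition adj (q : seq nat) := zip q (behead q).

Lemma all_adj_sorted (r : rel nat) q :
  all (fun p => r p.1 p.2) (adj q) = sorted r q.
Proof.
case: q => // x q; rewrite /adj /=.
elim: q x => //= y q IH x; by rewrite IH.
Qed.

Lemma sorted_sub_adj (e e' : rel nat) s :
  (forall a b, (a, b) \in adj s -> e a b -> e' a b) -> sorted e s -> sorted e' s.
Proof.
move=> H; rewrite -!all_adj_sorted => /allP Hs; apply/allP => [[a b]] Hp.
exact: H Hp (Hs _ Hp).
Qed.

Lemma adj_rcons a b l x : (a, b) \in adj (rcons l x) -> a \in l.
Proof.
rewrite /adj; elim: l => [|y l IH] //=.
case E: (rcons l x) IH => [|z s] IH; first by case: (l) E.
rewrite /= in_cons => /orP [/eqP [-> _]|H]; first by rewrite mem_head.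
by rewrite in_cons IH ?orbT.
Qed.

Lemma adj_mem12 a b q : (a, b) \in adj q -> (a \in q) && (b \in q).
Proof.
rewrite /adj; case: q => // x q.
elim: q x => //= y q IH x; rewrite in_cons => /orP [/eqP [-> ->]|/IH /andP [H1 H2]].
  by rewrite !in_cons !eqxx !orbT.
by apply/andP; split; rewrite in_cons ?H1 ?H2 orbT.
Qed.

Lemma adj_split a b q : (a, b) \in adj q -> exists l1 l2, q = l1 ++ a :: b :: l2.
Proof.
rewrite /adj; case: q => // x q.
elim: q x => //= y q IH x; rewrite in_cons => /orP [/eqP [-> ->]|/IH [l1 [l2 E]]].
  by exists [::], q.
by exists (x :: l1), l2; rewrite E.
Qed.

Lemma adj_in a b l1 l2 : (a, b) \in adj (l1 ++ a :: b :: l2).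
Proof.
rewrite /adj; case: l1 => [|x l1] /=; first by rewrite in_cons eqxx.
elim: l1 x => [|y l1 IH] x /=; rewrite in_cons; first by rewrite in_cons eqxx orbT.
by rewrite IH orbT.
Qed.

Lemma sorted_cat_cons (r : rel nat) l1 x l2 :
  sorted r (l1 ++ x :: l2) = sorted r (rcons l1 x) && path r x l2.
Proof.
case: l1 => [|y l1] //=.
by rewrite cat_path rcons_path /= andbA.
Qed.

Definition R (m a b : nat) := (a < m) || (b != a.+1).
Definition nsg m q := all (fun p => (p.1 < m) || (p.2 != p.1.+1)) (adj q).
Definition glued v q := (v, v.+1) \in adj q.

Lemma nsgE m q : nsg m q = sorted (R m) q.
Proof. by rewrite /nsg -all_adj_sorted. Qed.

Section Key.
Variable v : nat.

Lemma Limp a b : a != v -> a != v.+1 -> b != v.+1 ->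
  R v.+1 a b -> R v (down v a) (down v b).
Proof. rewrite /R /down; case: ifP; case: ifP; lia. Qed.

Lemma Limp2 a b : a != v -> R v a b -> R v.+1 (up v a) (up v b).
Proof. rewrite /R /up; case: ifP; case: ifP; lia. Qed.

Lemma uniq_mid (l1 l2 : seq nat) x : uniq (l1 ++ x :: l2) -> (x \notin l1) && (x \notin l2).
Proof.
rewrite cat_uniq /= => /and3P [_ H /andP [-> _]].
by move: H; rewrite negb_or => /andP [-> _].
Qed.

Lemma uniq_mid2 (l1 l2 : seq nat) : uniq (l1 ++ v :: v.+1 :: l2) ->
  [/\ v \notin l1, v \notin l2, v.+1 \notin l1 & v.+1 \notin l2].
Proof.
move=> U; have /andP [A1 A2] := uniq_mid U.
move: U; rewrite -cat1s catA => /uniq_mid /andP [B1 B2].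
move: A2 B1; rewrite in_cons mem_cat negb_or !in_cons !negb_or => /andP [_ A2] /andP [B1 _].
by split.
Qed.

Lemma del_notin l : v.+1 \notin l -> filter (predC1 v.+1) l = l.
Proof. move=> H; apply/all_filterP/allP => x /= Hx; apply/eqP => E; by rewrite -E Hx in H. Qed.

Lemma del_split l1 l2 : uniq (l1 ++ v :: v.+1 :: l2) ->
  del v (l1 ++ v :: v.+1 :: l2) = map (down v) (l1 ++ v :: l2).
Proof.
move/uniq_mid2 => [_ _ n1 n2].
rewrite /del filter_cat /= eqxx /=.
have -> : (v != v.+1) by lia.
by rewrite !del_notin.
Qed.

Lemma Limp3 c : c != v -> c != v.+1 -> R v.+1 v.+1 c -> R v (down v v) (down v c).
Proof. rewrite /R /down; case: ifP; case: ifP; lia. Qed.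

Lemma del_nsg q : uniq q -> glued v q -> nsg v.+1 q -> nsg v (del v q).
Proof.
move=> U /adj_split [l1 [l2 E]]; subst q.
rewrite del_split // !nsgE sorted_map [sorted _ (l1 ++ _)]sorted_cat_cons.
rewrite sorted_cat_cons => /andP [H1 H2].
have [a1 a2 b1 b2] := uniq_mid2 U.
apply/andP; split.
  apply: sorted_sub_adj H1 => a b Hab /=; have Ha := adj_rcons Hab.
  have /andP [_ Hb] := adj_mem12 Hab.
  apply: Limp.
  - by apply/eqP => E; rewrite -E Ha in a1.
  - by apply/eqP => E; rewrite -E Ha in b1.
  - apply/eqP => E; move: Hb; rewrite E mem_rcons in_cons => /orP [/eqP|]; first lia.
    by move=> H; rewrite H in b1.
move: H2 => /= /andP [_]; case: l2 a2 b2 {U} => [|c l2] //= a2 b2 /andP [Hc Hp].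
rewrite !in_cons !negb_or in a2 b2; case/andP: a2 => a2 a3; case/andP: b2 => b2 b3.
apply/andP; split; first by apply: Limp3; rewrite 1?eq_sym.
apply: (@sub_in_path _ (fun x => (x != v) && (x != v.+1))) Hp.
  move=> a b /andP [? ?] /andP [? ?] /=; exact: Limp.
rewrite /= eq_sym a2 eq_sym b2 /=; apply/allP => x Hx.
apply/andP; split; apply/eqP => E; subst x; [by rewrite Hx in a3 | by rewrite Hx in b3].
Qed.

Lemma ins_split l1 l2 : v \notin l1 -> v \notin l2 ->
  ins v (l1 ++ v :: l2) = map (up v) l1 ++ v :: v.+1 :: map (up v) l2.
Proof.
by move=> n1 n2; rewrite ins_cat ins_cons /E eqxx !ins_notin.
Qed.

Lemma glued_ins q : uniq q -> v \in q -> glued v (ins v q).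
Proof.
move=> U Hv; case/splitPr: Hv U => l1 l2 U; have /andP [n1 n2] := uniq_mid U.
by rewrite ins_split //; apply: adj_in.
Qed.

Lemma ins_nsg q : uniq q -> v \in q -> nsg v q -> nsg v.+1 (ins v q).
Proof.
move=> U Hv; case/splitPr: Hv U => l1 l2 U; have /andP [n1 n2] := uniq_mid U.
rewrite ins_split // !nsgE !sorted_cat_cons => /andP [H1 H2].
have upv : up v v = v by rewrite /up ltnn.
apply/andP; split.
  have -> : rcons (map (up v) l1) v = map (up v) (rcons l1 v) by rewrite map_rcons upv.
  rewrite sorted_map.
  apply: sorted_sub_adj H1 => a b Hab /=; have Ha := adj_rcons Hab.
  apply: Limp2; by apply/eqP => E; rewrite -E Ha in n1.
rewrite /= {1}/R ltnSn /=.
case: l2 n2 H2 {U} => [|c l2] //= n2 /andP [Hc Hp].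
rewrite in_cons negb_or in n2; case/andP: n2 => n2 n3.
apply/andP; split; first by move: Hc; rewrite /R /up; case: ifP; lia.
have := @sub_in_path _ (fun x => x != v) (R v) (relpre (up v) (R v.+1)).
move=> /(_ _ c l2) H; rewrite -[path _ (up v c) _]/(sorted _ (up v c :: map (up v) l2)).
rewrite -map_cons sorted_map /=; apply: H Hp.
  move=> a b Ha _ /=; exact: Limp2.
rewrite /= eq_sym n2 /=; apply/allP => x Hx; apply/eqP => E; subst x; by rewrite Hx in n3.
Qed.

Lemma ins_del q : uniq q -> glued v q -> ins v (del v q) = q.
Proof.
move=> U /adj_split [l1 [l2 E]]; subst q.
have [a1 a2 b1 b2] := uniq_mid2 U.
rewrite del_split // map_cat /=.
have -> : down v v = v by rewrite /down; case: ifP; lia.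
have dn : forall l, v \notin l -> v.+1 \notin l -> v \notin map (down v) l.
  move=> l h1 h2; apply/mapP => [[x Hx E]]; move: E; rewrite /down; case: ifP => H E.
  - lia.
  - by rewrite E Hx in h1.
have ud : forall l, v.+1 \notin l -> map (up v) (map (down v) l) = l.
  move=> l h; rewrite -map_comp; apply: map_id_in => x Hx /=.
  have : x != v.+1 by apply/eqP => E; rewrite -E Hx in h.
  rewrite /up /down; case: ifP; case: ifP; lia.
by rewrite ins_split ?dn // !ud.
Qed.

Lemma del_ins q : del v (ins v q) = q.
Proof.
elim: q => // x q IH; rewrite ins_cons /del filter_cat map_cat.
rewrite -[map _ (filter _ (ins v q))]/(del v (ins v q)) IH /E.
case: ifP => [/eqP ->|xv] /=.
  rewrite eqxx /=; have -> : (v != v.+1) by lia.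
  by rewrite /= /down; case: ifP => //; lia.
have : up v x != v.+1 by move: xv; rewrite /up; case: ifP; lia.
move=> ->; rewrite /= /down /up; congr (_ :: _); case: ifP; case: ifP; lia.
Qed.


Lemma perm_del n q : perm_eq q (iota 1 n.+1) -> v <= n -> perm_eq (del v q) (iota 1 n).
Proof.
move=> Hq vn; rewrite -(del_iota vn); apply: perm_map; exact: perm_filter.
Qed.

Lemma perm_ins n q : perm_eq q (iota 1 n) -> 0 < v <= n -> perm_eq (ins v q) (iota 1 n.+1).
Proof.
move=> Hq vn; rewrite -(ins_iota vn); apply: perm_flatten; exact: perm_map.
Qed.

Lemma nsg_split q : nsg v q = nsg v.+1 q && ~~ glued v q.
Proof.
rewrite /nsg /glued; elim: (adj q) => //= [[a b] l] IH.
rewrite IH in_cons negb_or xpair_eqE /=.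
have key : ((a < v) || (b != a.+1)) = ((a < v.+1) || (b != a.+1)) && ~~ ((a == v) && (b == v.+1)).
  by apply/idP/idP; lia.
rewrite key (eq_sym v a) (eq_sym v.+1 b).
by case: (a < v.+1); case: (b != a.+1); case: (a == v); case: (b == v.+1); case: (all _ l); case: ((v, v.+1) \in l).
Qed.
End Key.

Lemma count_split (T : Type) (a b : pred T) s :
  count a s = count (fun x => a x && b x) s + count (fun x => a x && ~~ b x) s.
Proof. elim: s => //= x s ->; case: (a x); case: (b x) => /=; lia. Qed.

Lemma count_bij (L1 L2 : seq (seq nat)) (P1 P2 : pred (seq nat)) (f g : seq nat -> seq nat) :
  uniq L1 -> uniq L2 ->
  (forall x, x \in L1 -> P1 x -> (f x \in L2) && P2 (f x)) ->
  (forall y, y \in L2 -> P2 y -> (g y \in L1) && P1 (g y)) ->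
  (forall x, x \in L1 -> P1 x -> g (f x) = x) ->
  (forall y, y \in L2 -> P2 y -> f (g y) = y) ->
  count P1 L1 = count P2 L2.
Proof.
move=> U1 U2 Hf Hg Hgf Hfg; rewrite -!size_filter; apply/eqP; rewrite eqn_leq.
apply/andP; split.
  rewrite -(size_map f); apply: uniq_leq_size.
    rewrite map_inj_in_uniq ?filter_uniq // => x y; rewrite !mem_filter.
    move=> /andP [Px Lx] /andP [Py Ly] E.
    by rewrite -(Hgf x) // E Hgf.
  move=> y /mapP [x]; rewrite mem_filter => /andP [Px Lx] ->.
  by rewrite mem_filter; case/andP: (Hf x Lx Px) => -> ->.
rewrite -(size_map g); apply: uniq_leq_size.
  rewrite map_inj_in_uniq ?filter_uniq // => x y; rewrite !mem_filter.
  move=> /andP [Px Lx] /andP [Py Ly] E.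
  by rewrite -(Hfg x) // E Hfg.
move=> y /mapP [x]; rewrite mem_filter => /andP [Px Lx] ->.
by rewrite mem_filter; case/andP: (Hg x Lx Px) => -> ->.
Qed.

Definition H n m := count (fun q => `[< achievable n q >] && nsg m q) (permutations (iota 1 n)).

Lemma perm_iota_uniq n q : q \in permutations (iota 1 n) -> uniq q.
Proof. by rewrite mem_permutations => /perm_uniq ->; apply: iota_uniq. Qed.

Lemma H_rec n v : 0 < v <= n -> H n.+1 v.+1 = H n.+1 v + H n v.
Proof.
move=> vn; rewrite /H (count_split _ (glued v)) addnC; congr (_ + _).
  by apply: eq_count => q; rewrite (nsg_split v q) andbA.
apply: (count_bij (f := del v) (g := ins v)); rewrite ?permutations_uniq //.
- move=> x Lx /andP [/andP [/asboolP Ax Nx] Gx]; have Ux := perm_iota_uniq Lx.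
  move: Lx; rewrite !mem_permutations => Lx.
  rewrite perm_del //=; last lia.
  rewrite del_nsg // andbT; apply/asboolP; apply: ach_del => //; lia.
- move=> y Ly /andP [/asboolP Ay Ny]; have Uy := perm_iota_uniq Ly.
  move: Ly; rewrite !mem_permutations => Ly.
  have vy : v \in y by rewrite (perm_mem Ly) mem_iota; lia.
  rewrite perm_ins // ins_nsg // glued_ins // !andbT /=.
  by apply/asboolP; apply: ach_ins.
- move=> x Lx /andP [_ Gx]; apply: ins_del => //; exact: perm_iota_uniq Lx.
- by move=> y _ _; apply: del_ins.
Qed.

Lemma perm_iota_mem n q x : q \in permutations (iota 1 n) -> x \in q -> 0 < x <= n.
Proof. rewrite mem_permutations => /perm_mem ->; rewrite mem_iota; lia. Qed.

Lemma H_top n : H n n = s_num n.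
Proof.
rewrite /H /s_num; apply: eq_in_count => q Lq /=.
have -> : nsg n q by apply/allP => [[a b]] /adj_mem12 /andP [_ /(perm_iota_mem Lq)] /=; lia.
by rewrite andbT.
Qed.

Lemma H_bot n : H n 1 = t_num n.
Proof.
rewrite /H /t_num; apply: eq_in_count => q Lq /=; congr (_ && _).
rewrite /nsg /no_succession; apply: eq_in_all => [[a b]] /adj_mem12 /andP [/(perm_iota_mem Lq) Ha _] /=.
by have -> : (a < 1) = false by lia.
Qed.

Lemma H_closed k : forall n, k < n ->
  H n k.+1 = (\sum_(1 <= i < n.+1) 'C(k, n - i) * t_num i)%N.
Proof.
elim: k => [|k IH] n kn.
  rewrite H_bot big_nat_recr /=; last lia.
  rewrite big1_seq ?subnn ?bin0 ?mul1n //= => i; rewrite mem_index_iota => Hi.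
  by rewrite bin0n; have -> : (n - i == 0) = false by lia.
case: n kn => [|n] kn; first lia.
rewrite H_rec; last lia.
rewrite IH; last lia. rewrite IH; last lia.
rewrite big_nat_recr /=; last lia.
rewrite (@big_nat_recr _ _ _ n.+1 1) /=; last lia.
rewrite subnn !bin0 -addnA [_ * _ + _]addnC addnA; congr (_ + _).
rewrite -big_split /=; apply: eq_big_nat => i Hi.
have -> : n.+1 - i = (n - i).+1 by lia.
by rewrite binS mulnDl.
Qed.

Theorem part2 n : 1 <= n ->
  s_num n = (\sum_(1 <= i < n.+1) 'C(n.-1, i.-1) * t_num i)%N.
Proof.
move=> n1; rewrite -H_top.
have -> : n = n.-1.+1 by lia.
rewrite H_closed; last lia.
apply: eq_big_nat => i Hi; congr (_ * _).
rewrite -bin_sub; last lia.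
congr 'C(_, _); lia.
Qed.

Lemma s0 : s_num 0 = 1%N.
Proof.
rewrite /s_num /=.
have -> : `[< achievable 0 [::] >] = true by apply/asboolP; exists [::].
by [].
Qed.

Lemma t0 : t_num 0 = 1%N.
Proof.
rewrite /t_num /=.
have -> : `[< achievable 0 [::] >] = true by apply/asboolP; exists [::].
by [].
Qed.

Lemma s_succ N n : (n < N)%N -> s_num n.+1 = (\sum_(i < N) 'C(n, i) * t_num i.+1)%N.
Proof.
move=> nN; rewrite part2 // big_add1 /=.
rewrite -(big_mkord (fun _ => true) (fun i => 'C(n, i) * t_num i.+1)%N).
rewrite [RHS](big_cat_nat _ (n := n.+1)) //=.
rewrite [X in (_ = _ + X)%N]big1_seq ?addn0 // => i; rewrite mem_index_iota => Hi.
by rewrite bin_small ?mul0n //; lia.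
Qed.



Local Open Scope ring_scope.

Section Eqm.
Variable N : nat.
Definition eqm (p q : {poly int}) := exists r, p = q + r * 'X ^+ N.+1.

Lemma eqm_refl p : eqm p p.
Proof. by exists 0; rewrite mul0r addr0. Qed.

Lemma eqm_trans p q s : eqm p q -> eqm q s -> eqm p s.
Proof. move=> [r1 ->] [r2 ->]; exists (r2 + r1); rewrite mulrDl; ring. Qed.

Lemma eqm_add p1 p2 q1 q2 : eqm p1 q1 -> eqm p2 q2 -> eqm (p1 + p2) (q1 + q2).
Proof. move=> [r1 ->] [r2 ->]; exists (r1 + r2); rewrite mulrDl; ring. Qed.

Lemma eqm_mull c p q : eqm p q -> eqm (c * p) (c * q).
Proof. move=> [r ->]; exists (c * r); ring. Qed.

Lemma eqm_scale (c : int) p q : eqm p q -> eqm (c *: p) (c *: q).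
Proof. rewrite -!mul_polyC; exact: eqm_mull. Qed.

Lemma eqm_take p q : eqm p q -> take_poly N.+1 p = take_poly N.+1 q.
Proof. by move=> [r ->]; rewrite take_polyD take_polyMXn_0 addr0. Qed.
End Eqm.

Definition Rp (N i : nat) : {poly int} := \sum_(n < N) ('C(n, i))%:R *: 'X ^+ n.+1.

Lemma I0 N : (1 - 'X) * Rp N 0 = 'X - 'X ^+ N.+1 :> {poly int}.
Proof.
elim: N => [|N IH]; first by rewrite /Rp big_ord0 mulr0 expr1 subrr.
rewrite /Rp big_ord_recr /= -/(Rp N 0) mulrDr IH bin0 scale1r.
rewrite !exprS; ring.
Qed.

Lemma I1 N i : (1 - 'X) * Rp N i.+1 = 'X * Rp N i - ('C(N, i.+1))%:R *: 'X ^+ N.+1 :> {poly int}.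
Proof.
elim: N => [|N IH]; first by rewrite /Rp !big_ord0 mulr0 bin0n scale0r subr0 mulr0.
rewrite /Rp !big_ord_recr /= -!/(Rp N _) !mulrDr IH binS.
rewrite -!mul_polyC !natrD !rmorphD /= !exprS; ring.
Qed.

Lemma K N i : eqm N ((1 - 'X) ^+ i.+1 * Rp N i) ('X ^+ i.+1).
Proof.
elim: i => [|i [r IH]].
  by exists (-1); rewrite expr1 I0; ring.
exists ('X * r - (1 - 'X) ^+ i.+1 * (('C(N, i.+1))%:R)%:P).
rewrite exprSr -mulrA I1 -mul_polyC mulrBr mulrA [(1 - 'X) ^+ i.+1 * 'X]mulrC -mulrA IH.
rewrite !exprS; ring.
Qed.
Theorem part1 N :
     take_poly N.+1 ((1 - 'X) ^+ N *
        \sum_(n < N.+1) (s_num n)%:R *: ('X ^+ n : {poly int}))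
     = take_poly N.+1
        (\sum_(i < N.+1) (t_num i)%:R *: ('X ^+ i * (1 - 'X) ^+ (N - i))).
Proof.
apply: eqm_take.
have L : \sum_(n < N.+1) (s_num n)%:R *: ('X ^+ n : {poly int})
    = 1 + \sum_(i < N) (t_num i.+1)%:R *: Rp N i.
  rewrite big_ord_recl s0 expr0 scale1r; congr (_ + _).
  under eq_bigr => n _ do rewrite lift0 (s_succ (ltn_ord n)) natr_sum scaler_suml.
  rewrite exchange_big /=; apply: eq_bigr => i _; rewrite /Rp scaler_sumr.
  by apply: eq_bigr => n _; rewrite natrM scalerA mulrC.
have Rr : \sum_(i < N.+1) (t_num i)%:R *: ('X ^+ i * (1 - 'X) ^+ (N - i))
    = (1 - 'X) ^+ N + \sum_(i < N) (t_num i.+1)%:R *: ('X ^+ i.+1 * (1 - 'X) ^+ (N - i.+1)) :> {poly int}.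
  by rewrite big_ord_recl t0 expr0 mul1r subn0 scale1r.
rewrite L Rr mulrDr mulr1; apply: eqm_add; first exact: eqm_refl.
rewrite mulr_sumr; apply: (big_ind2 (eqm N)).
- exact: eqm_refl.
- by move=> ? ? ? ?; apply: eqm_add.
move=> i _; rewrite -scalerAr; apply: eqm_scale.
have -> : (1 - 'X) ^+ N = (1 - 'X) ^+ (N - i.+1) * (1 - 'X) ^+ i.+1 :> {poly int}.
  by rewrite -exprD subnK.
rewrite -mulrA [X in eqm _ _ X]mulrC; apply: eqm_mull; exact: K.
Qed.


Theorem mainTheorem2 :
  (forall N : nat,
     take_poly N.+1 ((1 - 'X) ^+ N *
        \sum_(n < N.+1) (s_num n)%:R *: ('X ^+ n : {poly int}))
     = take_poly N.+1
        (\sum_(i < N.+1) (t_num i)%:R *: ('X ^+ i * (1 - 'X) ^+ (N - i))))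
  /\
  (forall n : nat, (1 <= n)%N ->
     s_num n = (\sum_(1 <= i < n.+1) 'C(n.-1, i.-1) * t_num i)%N).
Proof. split; [exact: part1 | exact: part2]. Qed.
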